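(* Let $G=(V,E)$ be a simple, connected graph with maximum degree $\Delta$, and let $V = A \cup B \cup C$ be a partition into pairwise disjoint sets ($C$ possibly empty) satisfying: (1) every $v \in A$ satisfies $d_B(v) \geq d_A(v) + \max\{1, d_C(v)\}$; (2) every $v \in B$ satisfies $d_A(v) \geq d_B(v) + \max\{1, d_C(v)\}$; (3) $d_C(v) = 0$ for all $v \in C$; (4) every $v \in C$ satisfies $d_A(v) = d_B(v)$; (5) $\# E(A \cup B, C) + 2\# E(A,A) + 2\# E(B,B) \leq 2\# E(A,B)$. Then the number of edges between $A \cup C$ and $B$ satisfies $$\# E(A \cup C, B) \geq \left(\frac{1}{2} + \frac{1}{3\Delta}\right)|E|.$$
   Context: For a vertex $v$ and a set $S \subseteq V$, $d_S(v)$ denotes the number of neighbors of $v$ in $S$. For disjoint $X,Y \subseteq V$, $\# E(X,Y)$ is the number of edges with one endpoint in $X$ and the other in $Y$; $\# E(X,X)$ is the number of edges with both endpoints in $X$. *)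

(* Defs.v *)
From mathcomp Require Import all_boot all_order all_algebra.
Set Implicit Arguments. Unset Strict Implicit. Unset Printing Implicit Defensive.

Definition simple_graph (T : finType) (e : rel T) : Prop :=
  symmetric e /\ irreflexive e.

Definition connected_graph (T : finType) (e : rel T) : Prop :=
  forall x y : T, connect e x y.

Definition deg_in (T : finType) (e : rel T) (S : {set T}) (v : T) : nat :=
  #|[set u in S | e v u]|.

Definition max_degree (T : finType) (e : rel T) : nat :=
  \max_(v : T) #|[set u | e v u]|.

Definition edges (T : finType) (e : rel T) : {set {set T}} :=
  [set [set x; y] | x in T, y in T & e x y].

Definition nedges_between (T : finType) (e : rel T) (X Y : {set T}) : nat :=
  #|[set f in edges e | [exists x in X, exists y in Y, f == [set x; y]]]|.

Definition nedges_within (T : finType) (e : rel T) (X : {set T}) : nat :=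
  #|[set f in edges e | f \subset X]|.

(* Main.v *)
From mathcomp Require Import all_boot all_order all_algebra.
From mathcomp Require Import zify ring lra.
Import Order.TTheory GRing.Theory Num.Theory.
Require Import Defs.
Set Implicit Arguments. Unset Strict Implicit.

Section G.
Variables (T : finType) (e : rel T).

Lemma deg_sum (S : {set T}) v : deg_in e S v = \sum_(u in S) (e v u : nat).
Proof.
rewrite /deg_in -sum1_card big_mkcond /= [RHS]big_mkcond /=.
by apply: eq_bigr => u _; rewrite inE; case: (u \in S); case: (e v u).
Qed.

Lemma deg_sym (X Y : {set T}) : symmetric e ->
  \sum_(x in X) deg_in e Y x = \sum_(y in Y) deg_in e X y.
Proof.
move=> sy.
under eq_bigr do rewrite deg_sum.
under [RHS]eq_bigr do rewrite deg_sum.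
rewrite exchange_big /=; apply: eq_bigr => y _; apply: eq_bigr => x _.
by rewrite sy.
Qed.

Lemma card_pairs (P : T -> T -> bool) :
  #|[set p : T * T | P p.1 p.2]| = \sum_x \sum_y (P x y : nat).
Proof.
rewrite pair_big /= -sum1_card big_mkcond /=.
by apply: eq_bigr => p _; rewrite inE; case: (P _ _).
Qed.

Lemma between_ge (X Y : {set T}) : [disjoint X & Y] ->
  \sum_(x in X) deg_in e Y x <= nedges_between e X Y.
Proof.
move=> dXY.
have -> : \sum_(x in X) deg_in e Y x =
   #|[set p : T * T | (p.1 \in X) && ((p.2 \in Y) && e p.1 p.2)]|.
  rewrite (card_pairs (fun x y => (x \in X) && ((y \in Y) && e x y))) big_mkcond /=; apply: eq_bigr => x _.
  rewrite deg_sum big_mkcond /=.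
  case: (x \in X) => /=; last by rewrite big1.
  by apply: eq_bigr => y _; case: (y \in Y).
rewrite -(@card_in_imset _ _ (fun p : T * T => [set p.1; p.2])); last first.
  move=> [x y] [x' y']; rewrite !inE /= => /andP[xX /andP[yY _]] /andP[x'X /andP[y'Y _]] E.
  have hx : x \in [set x'; y'] by rewrite -E set21.
  have hy : y \in [set x'; y'] by rewrite -E set22.
  rewrite !inE in hx hy.
  case/orP: hx => /eqP hx; last by subst; rewrite (disjointFr dXY xX) in y'Y.
  case/orP: hy => /eqP hy; first by subst; rewrite (disjointFr dXY x'X) in yY.
  by subst.
apply: subset_leq_card; apply/subsetP => f /imsetP [[x y]]; rewrite !inE /= => /andP[xX /andP[yY exy]] ->.
idtac.
apply/andP; split.
  by rewrite /edges; apply/imset2P; exists x y; rewrite ?inE ?exy.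
apply/existsP; exists x; rewrite xX /=.
by apply/existsP; exists y; rewrite yY eqxx.
Qed.

Lemma edges_le : simple_graph e ->
  2 * #|edges e| <= \sum_v #|[set u | e v u]|.
Proof.
case=> sy irr.
have -> : \sum_v #|[set u | e v u]| = \sum_(p in [set p : T * T | e p.1 p.2]) 1.
  rewrite sum1_card (card_pairs e); apply: eq_bigr => x _.
  by rewrite -sum1_card big_mkcond /=; apply: eq_bigr => y _; rewrite inE; case: (e x y).
rewrite (partition_big (fun p : T * T => [set p.1; p.2]) (mem (edges e))) /=; last first.
  by move=> [x y]; rewrite inE /= => exy; apply/imset2P; exists x y; rewrite ?inE.
rewrite mulnC -sum_nat_const; apply: leq_sum => f /imset2P [x y _]; rewrite inE /= => exy ->.
rewrite (bigD1 (x, y)) /=; last by rewrite inE exy eqxx.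
rewrite (bigD1 (y, x)) /=; last first.
  rewrite inE /= sy exy /=.
  rewrite [[set y; x]]setUC eqxx /=.
  by apply/eqP => [[E]]; subst; rewrite irr in exy.
by [].
Qed.


Lemma disjU (X Y Z : {set T}) : [disjoint X & Z] -> [disjoint Y & Z] -> [disjoint X :|: Y & Z].
Proof.
move=> h1 h2; rewrite -setI_eq0; apply/eqP/setP => x; rewrite !inE.
case hz: (x \in Z); last by rewrite andbF.
by rewrite (disjointFl h1 hz) (disjointFl h2 hz).
Qed.

Lemma sumU (X Y : {set T}) (F : T -> nat) : [disjoint X & Y] ->
  \sum_(i in X :|: Y) F i = \sum_(i in X) F i + \sum_(i in Y) F i.
Proof.
move=> d; rewrite -bigU //; apply: eq_bigl => x; by rewrite !inE.
Qed.

Lemma pervertex (p q r D : nat) : q >= p + maxn 1 r -> p + q + r <= D ->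
  2 * (p + q + r) + 2 * r + 3 * D * p <= 3 * D * q.
Proof.
move=> h1 h2.
case: (posnP r) => hr.
  subst r. have : 1 <= q - p by lia. nia.
have : r <= q - p by lia.
nia.
Qed.

End G.
Theorem corollary3 (T : finType) (e : rel T) (A B C : {set T}) :
  simple_graph e -> connected_graph e ->
  [disjoint A & B] -> [disjoint A & C] -> [disjoint B & C] ->
  A :|: B :|: C = [set: T] ->
  (forall v, v \in A ->
     (deg_in e B v >= deg_in e A v + maxn 1 (deg_in e C v))%N) ->
  (forall v, v \in B ->
     (deg_in e A v >= deg_in e B v + maxn 1 (deg_in e C v))%N) ->
  (forall v, v \in C -> deg_in e C v = 0%N) ->
  (forall v, v \in C -> deg_in e A v = deg_in e B v) ->
  (nedges_between e (A :|: B) C + 2 * nedges_within e A + 2 * nedges_within e B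
     <= 2 * nedges_between e A B)%N ->
  ((1 / 2 + 1 / (3 * (max_degree e)%:R)) * (#|edges e|)%:R
     <= ((nedges_between e (A :|: C) B)%:R : rat))%R.
Proof.
move=> sg _ dAB dAC dBC cov hA hB hC0 hCe _.
have sy := sg.1.
set D := max_degree e.
have part u : (u \in A) + (u \in B) + (u \in C) = 1.
  have := in_setT u; rewrite -cov !inE.
  case uA: (u \in A); first by rewrite (disjointFr dAB uA) (disjointFr dAC uA).
  case uB: (u \in B); first by rewrite (disjointFr dBC uB).
  by move=> /= ->.
have degsplit v : #|[set u | e v u]| = deg_in e A v + deg_in e B v + deg_in e C v.
  rewrite !deg_sum -sum1_card big_mkcond /=.
  rewrite !(big_mkcond (fun u => u \in _)) -!big_split /=.
  apply: eq_bigr => u _; rewrite inE.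
  have := part u.
  by case: (u \in A); case: (u \in B); case: (u \in C); case: (e v u).
have sumall (F : T -> nat) : \sum_v F v = \sum_(v in A) F v + \sum_(v in B) F v + \sum_(v in C) F v.
  rewrite -!sumU //; last by apply: disjU.
  by rewrite cov; apply: eq_bigl => x; rewrite inE.
have degD v : deg_in e A v + deg_in e B v + deg_in e C v <= D.
  by rewrite -degsplit; apply: (leq_bigmax (F := fun v => #|[set u | e v u]|)).
clearbody D.
set a := \sum_(v in A) deg_in e A v.
set m := \sum_(v in A) deg_in e B v.
set g1 := \sum_(v in A) deg_in e C v.
set b := \sum_(v in B) deg_in e B v.
set g2 := \sum_(v in B) deg_in e C v.
have em : \sum_(v in B) deg_in e A v = m by rewrite deg_sym.
have eg3 : \sum_(v in C) deg_in e A v = g1 by rewrite deg_sym.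
have eg4 : \sum_(v in C) deg_in e B v = g2 by rewrite deg_sym.
have eg34 : \sum_(v in C) deg_in e A v = \sum_(v in C) deg_in e B v.
  by apply: eq_bigr => v vC; rewrite hCe.
have eC0 : \sum_(v in C) deg_in e C v = 0 by rewrite big1.
have h1 : 2 * #|edges e| <= a + m + g1 + (m + b + g2) + (g1 + g2).
  apply: (leq_trans (edges_le sg)).
  rewrite sumall; under eq_bigr do rewrite degsplit.
  under [X in _ + X + _]eq_bigr do rewrite degsplit.
  under [X in _ + X]eq_bigr do rewrite degsplit.
  by rewrite !big_split /= em eg3 eg4 eC0 -/a -/m -/g1 -/b -/g2 addn0.
have h2 : m + g2 <= nedges_between e (A :|: C) B.
  apply: leq_trans (between_ge e _); last by apply: disjU; rewrite // disjoint_sym.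
  by rewrite sumU // eg4.
have h3 : 2 * (a + m + g1) + 2 * g1 + 3 * D * a <= 3 * D * m.
  rewrite /a /m /g1 -!big_split !big_distrr -!big_split /=.
  by apply: leq_sum => v vA; exact: pervertex (hA v vA) (degD v).
have h4 : 2 * (b + m + g2) + 2 * g2 + 3 * D * b <= 3 * D * m.
  rewrite -em /b /g2 -!big_split !big_distrr -!big_split /=.
  by apply: leq_sum => v vB; apply: pervertex (hB v vB) _; rewrite (addnC (deg_in e B v)); exact: degD.
clearbody a m g1 b g2.
have eg : g1 = g2 by rewrite -eg3 -eg4.
clear eg3 eg4 eg34 em eC0. subst g1.
move: h1 h2 h3 h4.
set N := #|edges e|; set M := nedges_between e (A :|: C) B.
rewrite -!(ler_nat rat) !natrD !natrM => h1 h2 h3 h4.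
have := ler0n rat a; have := ler0n rat m; 
have := ler0n rat b; have := ler0n rat g2; have := ler0n rat N; have := ler0n rat M.
move=> hM hN hg2 hb hm ha.
case: (posnP D) => [D0|Dpos].
  rewrite D0 !mulr0 !mul0r in h3 h4 *.
  rewrite invr0 mulr0 addr0.
  lra.
have dpos : (0 < (D%:R : rat))%R by rewrite ltr0n.
set d := (D%:R : rat) in h3 h4 dpos *.
have d3 : (0 < 3 * d)%R by lra.
rewrite -(ler_pM2l d3).
have -> : (3 * d * ((1 / 2 + 1 / (3 * d)) * N%:R) = 3 * d * N%:R / 2 + N%:R)%R.
  by field; apply/eqP; lra.
have p1 := ler_wpM2l (ltW dpos) h1.
have p2 := ler_wpM2l (ltW dpos) h2.
lra.
Qed.
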